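(* Assume the General Content Request Model with the $R$-rarity condition for $R=\|\mathbf L\|_\infty$, and fix constant TTL vectors $\boldsymbol\theta\preccurlyeq\mathbf L$, $\boldsymbol\theta^s\preccurlyeq\mathbf L$. For f-TTL with these fixed TTLs, $$\lim_{n\to\infty}\frac1n\sum_{l=1}^n\mathbb 1\big(c(l)\notin\mathcal K,\ Y(l)=1\big)=0\quad\text{almost surely},$$ i.e. the fraction of requests that are hits on rare objects vanishes almost surely.
   Context: Standing model (General Content Request Model). Finitely many types $t\in[T]$; each type has a finite set $\mathcal K_t$ of recurrent objects and a countable set $\mathcal R_t$ of rare objects; $\mathcal K=\bigcup_t\mathcal K_t$, $K=|\mathcal K|$, recurrent objects labeled $1,\dots,K$. Requests arrive at times $A(l)$, $A(0)=0$, with i.i.d. inter-arrival times independent of labels, having a density that is absolutely continuous w.r.t. Lebesgue measure, with connected support and finite nonzero mean. A Markov chain $Z(l)$ on $\{1,\dots,K+T\}$, irreducible with $P(c,c)>0$ for all $c$, determines labels: $Z(l)=k\le K$ means request $l$ is for recurrent object $k$; $Z(l)=K+t$ means some rare object of type $t$ (arbitrary subject to the rarity condition). $c(l)$ is the object of request $l$. $X_{pre}(l)=\min\{A(l)-A(l'):l'<l,c(l')=c(l)\}$ ($\min\emptyset=\infty$), $\beta_t(l;R)=\mathbb 1(c(l)\in\mathcal R_t,X_{pre}(l)<R)$; $R$-rarity condition: for every $t$ and every $N_m$ with $N_m/\sqrt m\to\infty$, $\frac1{N_m}\sum_{l=m}^{m+N_m}\beta_t(l;R)\to0$ a.s. f-TTL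 with fixed TTLs $(\boldsymbol\theta,\boldsymbol\theta^s)$: deep cache, shallow cache, shadow cache (metadata only). Each object $c$ has timers $(\psi^0_c,\psi^1_c,\psi^2_c)$ decreasing at unit rate (floored at $0$); $c$ is in the deep cache while $\psi^0_c>0$, in the shallow cache while $\psi^1_c>0$, its metadata in the shadow cache while $\psi^2_c>0$. A request for $c$ of type $t$ is a hit ($Y(l)=1$) if $c$ is in the deep or shallow cache, a virtual hit if not but its metadata is in the shadow cache, and a miss otherwise ($Y(l)=0$ for virtual hits and misses); on a hit or virtual hit the timers are set to $(\theta_t,0,0)$, on a miss to $(0,\theta^s_t,\theta_t)$. *)

(* Defs.v *)
From HB Require Import structures.
From mathcomp Require Import all_boot all_order all_algebra.
From mathcomp Require Import all_classical all_reals all_analysis.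
Set Implicit Arguments. Unset Strict Implicit. Unset Printing Implicit Defensive.
Import Order.TTheory GRing.Theory Num.Theory.
Import numFieldNormedType.Exports.
Local Open Scope classical_set_scope.
Local Open Scope ring_scope.

(* Objects: recurrent objects 'I_K (object k has type [ty k]) and rare objects
   of type t, indexed by (t, j) with j : nat (the countable set R_t). *)
Definition obj (K T : nat) : Type := ('I_K + ('I_T * nat))%type.

Definition is_rare K T (o : obj K T) : bool := if o is inr _ then true else false.
Definition is_rare_of K T (t : 'I_T) (o : obj K T) : bool :=
  if o is inr p then p.1 == t else false.

Definition objtype K T (ty : 'I_K -> 'I_T) (o : obj K T) : 'I_T :=
  match o with inl k => ty k | inr p => p.1 end.

Section FTTL.
Variables (R : realType) (K T : nat) (ty : 'I_K -> 'I_T).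
Variables (theta thetas : 'I_T -> R).

(* timers (psi0, psi1, psi2) *)
Definition timers := (R * R * R)%type.
Definition tm0 : timers := (0, 0, 0).

Definition decay (dt : R) (x : timers) : timers :=
  (Num.max (x.1.1 - dt) 0, Num.max (x.1.2 - dt) 0, Num.max (x.2 - dt) 0).

(* hit: object in the deep or shallow cache *)
Definition in_cache (x : timers) : bool := (0 < x.1.1) || (0 < x.1.2).
Definition in_shadow (x : timers) : bool := 0 < x.2.

Definition new_timers (t : 'I_T) (x : timers) : timers :=
  if in_cache x || in_shadow x then (theta t, 0, 0)
  else (0, thetas t, theta t).

Definition update (st : obj K T -> timers) (o : obj K T) : obj K T -> timers :=
  fun o' => if o' == o then new_timers (objtype ty o) (st o) else st o'.

Variables (A : nat -> R) (c : nat -> obj K T).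

Fixpoint ttl_after (l : nat) : obj K T -> timers :=
  match l with
  | 0 => update (fun _ => tm0) (c 0)
  | l'.+1 => update (fun o => decay (A l'.+1 - A l') (ttl_after l' o)) (c l'.+1)
  end.

Definition ttl_before (l : nat) : obj K T -> timers :=
  match l with
  | 0 => fun _ => tm0
  | l'.+1 => fun o => decay (A l'.+1 - A l') (ttl_after l' o)
  end.

Definition Yhit (l : nat) : bool := in_cache (ttl_before l (c l)).

Definition Xpre (l : nat) : \bar R :=
  \big[Order.min/+oo%E]_(l' < l | c l' == c l) ((A l - A l')%:E).

Definition beta (t : 'I_T) (l : nat) (r : R) : bool :=
  is_rare_of t (c l) && (Xpre l < r%:E)%E.
End FTTL.

Definition supnorm (R : realType) (T : nat) (L : 'I_T -> R) : R :=
  \big[Num.max/0]_(t < T) `|L t|.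

Definition density_support (R : realType) (f : R -> R) : set R :=
  [set x | forall e : R, 0 < e ->
     (0 < \int[@lebesgue_measure R]_(y in ball x e) (f y)%:E)%E].

Definition irreducible (R : realType) (n : nat) (Pm : 'I_n -> 'I_n -> R) : Prop :=
  forall a b : 'I_n, exists s : seq 'I_n,
    path (fun x y => 0 < Pm x y) a s /\ last a s = b.

(* Main.v *)
Require Import Defs.
From HB Require Import structures.
From mathcomp Require Import all_boot all_order all_algebra.
From mathcomp Require Import all_classical all_reals all_analysis.
From mathcomp Require Import ring lra zify.
Import Order.TTheory GRing.Theory Num.Theory.
Import numFieldNormedType.Exports.
Local Open Scope classical_set_scope.
Local Open Scope ring_scope.
Set Implicit Arguments. Unset Strict Implicit. Unset Printing Implicit Defensive.

Lemma le_bigmax_seq (R : realType) (I : eqType) (r : seq I) (F : I -> R) i :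
  i \in r -> F i <= \big[Num.max/0]_(j <- r) F j.
Proof.
elim: r => [//|x r IH]; rewrite in_cons big_cons => /orP [/eqP->|/IH H].
  by rewrite le_max lexx.
by rewrite le_max H orbT.
Qed.

Lemma le_supnorm (R : realType) (T : nat) (L : 'I_T -> R) t : L t <= supnorm L.
Proof.
apply: le_trans (ler_norm _) _.
rewrite /supnorm; exact: (le_bigmax_seq (fun j => `|L j|) (mem_index_enum t)).
Qed.

Lemma mine_lel (R : realType) (a b : \bar R) : (Order.min a b <= a)%E.
Proof. rewrite /Order.min; case: ifPn => //; by rewrite leNgt. Qed.
Lemma mine_ler (R : realType) (a b : \bar R) : (Order.min a b <= b)%E.
Proof. rewrite /Order.min; case: ifPn => // h; exact: ltW. Qed.

Lemma bigmin_le_seq (R : realType) (I : eqType) (r : seq I) (P : pred I)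
   (F : I -> \bar R) i :
  i \in r -> P i -> (\big[Order.min/+oo%E]_(j <- r | P j) F j <= F i)%E.
Proof.
elim: r => [//|x r IH]; rewrite in_cons big_cons => /orP [/eqP->|/IH H] Pi.
  by rewrite Pi mine_lel.
case: ifP => _; [exact: le_trans (mine_ler _ _) (H Pi) | exact: H].
Qed.

Section Comb.
Variables (R : realType) (K T : nat) (ty : 'I_K -> 'I_T).
Variables (theta thetas : 'I_T -> R) (S : R).
Hypothesis hth : forall t, 0 <= theta t <= S.
Hypothesis hths : forall t, 0 <= thetas t <= S.
Variables (A : nat -> R) (c : nat -> obj K T).
Hypothesis hmono : forall l, A l <= A l.+1.

Definition G (l : nat) (o : obj K T) (v : R) :=
  0 <= v /\ (v = 0 \/ exists l0, (l0 <= l)%N /\ c l0 = o /\ v <= S - (A l - A l0)).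

Definition Gt l o (x : timers R) := G l o x.1.1 /\ G l o x.1.2 /\ G l o x.2.

Lemma G_fresh l v : 0 <= v <= S -> G l (c l) v.
Proof.
move=> /andP[h0 h1]; split => //; right; exists l; split => //; split => //.
by rewrite subrr subr0.
Qed.

Lemma G_nt l x : Gt l (c l) (new_timers theta thetas (objtype ty (c l)) x).
Proof.
have z : 0 <= (0:R) <= S by rewrite lexx /=; case/andP: (hth (objtype ty (c l))) => a b; apply: le_trans b.
have h1 := hth (objtype ty (c l)); have h2 := hths (objtype ty (c l)).
rewrite /new_timers; case: ifP => _; rewrite /Gt /=;
  (split; [|split]); by apply: G_fresh.
Qed.

Lemma G_decay l o v : G l o v -> G l.+1 o (Num.max (v - (A l.+1 - A l)) 0).
Proof.
move=> [v0 [->|[l0 [hl0 [hc hv]]]]].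
  have := hmono l => h; split; first by rewrite le_max lexx orbT.
  left; apply/eqP; rewrite eq_le le_max lexx orbT andbT ge_max lexx andbT.
  lra.
split; first by rewrite le_max lexx orbT.
case: (lerP (v - (A l.+1 - A l)) 0) => h.
  by left.
right; exists l0; split; first by apply: leqW.
split => //; lra.
Qed.

Lemma G_before l o v : G l o v -> 0 < Num.max (v - (A l.+1 - A l)) 0 ->
  exists l0, (l0 <= l)%N /\ c l0 = o /\ A l.+1 - A l0 < S.
Proof.
move=> [v0 [->|[l0 [hl0 [hc hv]]]]].
  have := hmono l => h; rewrite lt_max ltxx orbF; lra.
rewrite lt_max ltxx orbF => h; exists l0; do 2 split => //; lra.
Qed.

Lemma inv_after l o : Gt l o (ttl_after ty theta thetas A c l o).
Proof.
elim: l o => [|l IH] o /=; rewrite /update; case: eqP => [->|_].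
- exact: G_nt.
- by rewrite /Gt /= /G lexx; do !split; left.
- exact: G_nt.
- have [h1 [h2 h3]] := IH o.
  rewrite /Gt /decay /=. split; [exact: (G_decay h1)|split; [exact: (G_decay h2)|exact: (G_decay h3)]].
Qed.

Lemma hit_Xpre l : Yhit ty theta thetas A c l -> (Xpre A c l < S%:E)%E.
Proof.
case: l => [|l]; first by rewrite /Yhit /= /in_cache /= ltxx.
rewrite /Yhit /= /in_cache /decay /=.
have [h1 [h2 h3]] := inv_after l (c l.+1).
have key : forall v, G l (c l.+1) v -> 0 < Num.max (v - (A l.+1 - A l)) 0 ->
   (Xpre A c l.+1 < S%:E)%E.
  move=> v hv hp; have [l0 [hl0 [hc hlt]]] := G_before hv hp.
  have hl0' : (l0 < l.+1)%N by [].
  have hi : (Ordinal hl0') \in index_enum 'I_l.+1 := mem_index_enum _.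
  rewrite /Xpre.
  apply: le_lt_trans (@bigmin_le_seq _ _ _ (fun l' : 'I_l.+1 => c l' == c l.+1)
     (fun l' : 'I_l.+1 => (A l.+1 - A l')%:E) _ hi _) _.
  - by rewrite /= hc.
  - by rewrite /= lte_fin.
by case/orP => h; [exact: key h1 h | exact: key h2 h].
Qed.

Lemma rare_hit_beta l :
  ((is_rare (c l) && Yhit ty theta thetas A c l) <= \sum_(t < T) beta A c t l S)%N.
Proof.
case H: (Yhit _ _ _ _ _ _); last by rewrite andbF.
rewrite andbT /is_rare; case E: (c l) => [k|[t j]] //.
rewrite (bigD1 t) //= /beta E /= eqxx /=.
by move: (hit_Xpre H) => ->.
Qed.
End Comb.

Lemma cover (rh : nat -> bool) (bs : nat -> nat) n k :
  (forall l, rh l <= bs l)%N -> (1 <= k)%N -> (n <= k * k)%N ->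
  (\sum_(1 <= l < n.+1) rh l <= (k - 1) + \sum_(k <= l < (k + k * k).+1) bs l)%N.
Proof.
move=> hb hk hn.
apply: (@leq_trans (\sum_(1 <= l < (k + k * k).+1) rh l)).
  rewrite [X in (_ <= X)%N](@big_cat_nat _ _ _ n.+1) //=; try lia.
rewrite (@big_cat_nat _ _ _ k) //=; last lia.
apply: leq_add; last by apply: leq_sum => i _.
apply: (@leq_trans (\sum_(1 <= l < k) 1)); first by apply: leq_sum => i _; exact: leq_b1.
by rewrite sum_nat_const_nat muln1.
Qed.

Lemma cesaro_windows (R : realType) (T : nat) (rh : nat -> bool)
  (b : 'I_T -> nat -> bool) :
  (forall l, rh l <= \sum_(t < T) b t l)%N ->
  (forall t, (fun m : nat => (m * m)%:R^-1 *
      \sum_(m <= l < (m + m * m).+1) (b t l)%:R : R) @ \oo --> 0) ->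
  (fun n : nat => n%:R^-1 * \sum_(1 <= l < n.+1) (rh l)%:R : R) @ \oo --> 0.
Proof.
move=> hrb hw; apply/cvgrPdist_le => eps eps0.
pose eps1 := eps / (1 + 4 * T%:R).
have hd : 0 < 1 + 4 * T%:R :> R by rewrite ltr_pwDl // mulr_ge0.
have e1 : 0 < eps1 by rewrite divr_gt0.
have H : \forall m \near \oo, forall t : 'I_T, (0 < m)%N ->
    (\sum_(m <= l < (m + m * m).+1) b t l)%:R <= eps1 * (m * m)%:R.
  apply: filter_forall => t.
  have /cvgrPdist_le/(_ eps1 e1) := hw t; apply: filterS => m.
  rewrite sub0r normrN ger0_norm ?mulr_ge0 ?sumr_ge0 // => h m0.
  by move: h; rewrite -natr_sum mulrC ler_pdivrMr // ltr0n muln_gt0 m0.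
have [M _ HM] := H.
pose B := Num.Def.archi_bound eps1^-1.
have hB : eps1^-1 < B%:R by apply: archi_boundP; rewrite invr_ge0 ltW.
have hB1 : 1 <= eps1 * B%:R.
  by move: hB; rewrite -(ltr_pM2l e1) mulfV ?lt0r_neq0 // => /ltW.
exists ((M + B + 2) * (M + B + 2))%N => // n /= hn.
have exk : exists k, (n <= k * k)%N by exists n; nia.
case: (ex_minnP exk) => k hk hmin.
have kJ : (M + B + 2 <= k)%N by case: (leqP (M + B + 2) k) => // h; nia.
have hk1 : ((k - 1) * (k - 1) < n)%N.
  case: (ltnP ((k - 1) * (k - 1)) n) => // h.
  have := hmin _ h; lia.
have n0 : (0 < n)%N by nia.
have cov := @cover rh (fun l => (\sum_(t < T) b t l)%N) n k hrb ltac:(lia) hk.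
rewrite exchange_big /= in cov.
have hkB : ((k - 1) * B <= n)%N by nia.
have hk4 : (k * k <= 4 * n)%N by nia.
rewrite sub0r normrN ger0_norm ?mulr_ge0 ?sumr_ge0 //.
rewrite mulrC ler_pdivrMr ?ltr0n //.
rewrite -natr_sum.
move: cov; rewrite -(ler_nat R) => /le_trans; apply.
rewrite natrD natr_sum.
have h1 : (k - 1)%:R <= eps1 * n%:R :> R.
  apply: (@le_trans _ _ ((k - 1)%:R * (eps1 * B%:R))).
    by rewrite ler_peMr.
  by rewrite mulrCA -natrM (ler_pM2l e1) ler_nat.
have h2 : forall t : 'I_T, (\sum_(k <= l < (k + k * k).+1) b t l)%:R
     <= eps1 * (4 * n%:R) :> R.
  move=> t; apply: le_trans (HM k _ t _) _; [rewrite /=; lia | lia | ].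
  by rewrite (ler_pM2l e1) -natrM; apply: le_trans (_ : _ <= (4 * n)%:R) _; [rewrite ler_nat | rewrite natrM].
apply: le_trans (lerD h1 (ler_sum _ (fun t _ => h2 t))) _.
rewrite sumr_const card_ord -[_ *+ T]mulr_natr.
have -> : eps1 * n%:R + eps1 * (4 * n%:R) * T%:R
  = eps1 * (1 + 4 * T%:R) * n%:R by ring.
by rewrite /eps1 divfK ?lt0r_neq0.
Qed.

Lemma sq_div (R : realType) :
  (fun m : nat => (m * m)%:R / Num.sqrt (m%:R) : R) @ \oo --> +oo.
Proof.
apply/cvgryPge => A0.
exists (Num.Def.archi_bound `|A0|).+1 => // m /= hm.
have hA := archi_boundP (normr_ge0 A0).
have m1 : 1 <= m%:R :> R by rewrite ler1n; lia.
have s0 : 0 < Num.sqrt (m%:R) :> R by rewrite sqrtr_gt0; apply: lt_le_trans m1.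
have s1 : 1 <= Num.sqrt (m%:R) :> R.
  by rewrite -[X in X <= _]sqrtr1 ler_sqrt.
have sm : Num.sqrt (m%:R) <= m%:R :> R.
  rewrite -{2}(sqr_sqrtr (ler0n _ m)) expr2.
  by rewrite ler_peMl // ltW.
apply: (@le_trans _ _ m%:R).
  apply: le_trans (ler_norm _) _; apply: le_trans (ltW hA) _.
  by rewrite ler_nat; exact: ltnW.
by rewrite ler_pdivlMr // natrM ler_pM2l // ltr0n; lia.
Qed.

Lemma negligible_bigU d (T : ringOfSetsType d) (R : realFieldType)
  (mu : {measure set T -> \bar R}) (I : Type) (r : seq I) (G : I -> set T) :
  (forall i, mu.-negligible (G i)) -> mu.-negligible (\big[setU/set0]_(i <- r) G i).
Proof.
move=> h; elim/big_ind: _ => //; [exact: negligible_set0 | exact: negligibleU].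
Qed.

Lemma in_bigU (T : Type) (I : eqType) (r : seq I) (G : I -> set T) i x :
  i \in r -> G i x -> (\big[setU/set0]_(j <- r) G j) x.
Proof.
elim: r => [//|y r IH]; rewrite in_cons big_cons => /orP[/eqP <-|/IH h] g.
  by left.
by right; apply: h.
Qed.

Lemma mono_ae (R : realType) (d : measure_display) (Omega : measurableType d)
  (P : probability Omega R) (K T : nat)
  (A : nat -> Omega -> R) (Z : nat -> Omega -> 'I_(K + T))
  (f : R -> R) (pi0 : 'I_(K + T) -> R) (Pm : 'I_(K + T) -> 'I_(K + T) -> R)
  (hAmeas : forall l, measurable_fun setT (A l))
  (hZmeas : forall l (z : 'I_(K + T)), measurable (Z l @^-1` [set z]))
  (hf_neg : forall x, x < 0 -> f x = 0)
  (hlaw : forall (n : nat) (B : nat -> set R) (z : nat -> 'I_(K + T)),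
     (forall i, measurable (B i)) ->
     P [set w | (forall i, (0 < i <= n)%N -> B i (A i w - A i.-1 w)) /\
                (forall i, (i <= n)%N -> Z i w = z i)]
     = (\prod_(1 <= i < n.+1) \int[@lebesgue_measure R]_(x in B i) (f x)%:E
        * (pi0 (z 0%N) * \prod_(i < n) Pm (z i) (z i.+1))%:E)%E) :
  forall l, \forall w \ae P, A l w <= A l.+1 w.
Proof.
move=> l.
pose Bf := fun i => if i == l.+1 then [set x : R | x < 0] else setT.
have mBf : forall i, measurable (Bf i).
  move=> i; rewrite /Bf; case: ifP => _ //.
  rewrite (_ : [set x : R | x < 0] = `]-oo, 0[%classic); first exact: measurable_itv.
  by apply/seteqP; split => x /=; rewrite in_itv.
pose zf := fun (s : {ffun 'I_(l.+2) -> 'I_(K + T)}) (i : nat) => s (inord i).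
pose Es := fun s => [set w | (forall i, (0 < i <= l.+1)%N -> Bf i (A i w - A i.-1 w)) /\
                (forall i, (i <= l.+1)%N -> Z i w = zf s i)].
have nE : forall s, P.-negligible (Es s).
  move=> s; exists (Es s); split => //.
  - have mE : measurable [set w | A l.+1 w - A l w < 0].
      have := measurable_realfun.measurable_funB (hAmeas l.+1) (hAmeas l) measurableT (mBf l.+1).
      by rewrite /Bf eqxx setTI.
    have mZ : measurable (\bigcap_i (if (i <= l.+1)%N then Z i @^-1` [set zf s i]
                                      else setT)).
      by apply: bigcapT_measurable => i; case: ifP.
    rewrite (_ : Es s = [set w | A l.+1 w - A l w < 0] `&`
         \bigcap_i (if (i <= l.+1)%N then Z i @^-1` [set zf s i] else setT)).
      exact: measurableI.
    apply/seteqP; split => w /=.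
    + move=> [hB hZ]; split.
        by have := hB l.+1; rewrite /Bf eqxx /=; apply.
      by move=> i _; case: ifP => // /hZ.
    + move=> [hE hZ]; split.
        by move=> i _; rewrite /Bf; case: eqP => // ->.
      by move=> i il; have := hZ i I; rewrite il.
  - rewrite hlaw // big_nat_recr //= /Bf eqxx.
    by rewrite integral0_eq ?mule0 ?mul0e // => x /= /hf_neg ->.
change (P.-negligible (~` [set w | A l w <= A l.+1 w])).
apply: (negligibleS _ (negligible_bigU (enum {ffun 'I_(l.+2) -> 'I_(K + T)}) nE)).
move=> w /= hw.
apply: (@in_bigU _ _ _ _ [ffun i : 'I_(l.+2) => Z i w]); first by rewrite mem_enum.
split.
- move=> i /andP[i0 il]; rewrite /Bf; case: eqP => // ->.
  by rewrite /= subr_lt0 ltNge; apply/negP.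
- move=> i il; rewrite /zf ffunE inordK //.
Qed.

Unset Implicit Arguments. Set Strict Implicit.

Theorem mainTheorem5
  (R : realType) (d : measure_display) (Omega : measurableType d)
  (P : probability Omega R)
  (K T : nat) (ty : 'I_K -> 'I_T)
  (A : nat -> Omega -> R) (Z : nat -> Omega -> 'I_(K + T))
  (c : nat -> Omega -> obj K T)
  (f : R -> R) (pi0 : 'I_(K + T) -> R) (Pm : 'I_(K + T) -> 'I_(K + T) -> R)
  (L theta thetas : 'I_T -> R)
  (* arrival times *)
  (hA0 : forall w, A 0%N w = 0)
  (hAmeas : forall l, measurable_fun setT (A l))
  (hZmeas : forall l (z : 'I_(K + T)), measurable (Z l @^-1` [set z]))
  (* inter-arrival density *)
  (hf_meas : measurable_fun setT f)
  (hf_ge0 : forall x, 0 <= f x)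
  (hf_neg : forall x, x < 0 -> f x = 0)
  (hf_1 : (\int[@lebesgue_measure R]_x (f x)%:E = 1)%E)
  (hf_supp : connected (density_support f))
  (hf_mean_int : (@lebesgue_measure R).-integrable setT (fun x => (x * f x)%:E))
  (hf_mean_ne0 : (\int[@lebesgue_measure R]_x (x * f x)%:E != 0)%E)
  (* Markov chain of labels *)
  (hpi0_ge0 : forall z, 0 <= pi0 z)
  (hpi0_1 : \sum_z pi0 z = 1)
  (hPm_ge0 : forall a b, 0 <= Pm a b)
  (hPm_1 : forall a, \sum_b Pm a b = 1)
  (hPm_irr : irreducible Pm)
  (hPm_diag : forall a, 0 < Pm a a)
  (* joint law: i.i.d. inter-arrivals with density f, independent of the
     Markov chain Z with initial law pi0 and transition matrix Pm *)
  (hlaw : forall (n : nat) (B : nat -> set R) (z : nat -> 'I_(K + T)),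
     (forall i, measurable (B i)) ->
     P [set w | (forall i, (0 < i <= n)%N -> B i (A i w - A i.-1 w)) /\
                (forall i, (i <= n)%N -> Z i w = z i)]
     = (\prod_(1 <= i < n.+1) \int[@lebesgue_measure R]_(x in B i) (f x)%:E
        * (pi0 (z 0%N) * \prod_(i < n) Pm (z i) (z i.+1))%:E)%E)
  (* labels *)
  (hlab_rec : forall l w (k : 'I_K), c l w = inl k <-> Z l w = lshift T k)
  (hlab_rare : forall l w (t : 'I_T),
     (exists j, c l w = inr (t, j)) <-> Z l w = rshift K t)
  (* R-rarity condition, R = ||L||_oo *)
  (hrare : forall (t : 'I_T) (N : nat -> nat),
     (fun m : nat => (N m)%:R / Num.sqrt (m%:R) : R) @ \oo --> +oo ->
     {ae P, forall w,
        (fun m : nat => (N m)%:R^-1 *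
           \sum_(m <= l < (m + N m).+1)
              (beta (A^~ w) (c^~ w) t l (supnorm L))%:R : R) @ \oo --> 0})
  (* fixed TTL vectors theta <= L, theta^s <= L *)
  (htheta : forall t, 0 <= theta t <= L t)
  (hthetas : forall t, 0 <= thetas t <= L t) :
  {ae P, forall w,
     (fun n : nat => n%:R^-1 *
        \sum_(1 <= l < n.+1)
          (is_rare (c l w) && Yhit ty theta thetas (A^~ w) (c^~ w) l)%:R : R)
       @ \oo --> 0}.
Proof.
have Hm := ae_foralln (mono_ae hAmeas hZmeas hf_neg hlaw).
have Hr := @filter_forall _ _ _ (almost_everywhere P) _ (fun t => hrare t (fun m => (m * m)%N) (@sq_div R)).
near=> w.
have hm : forall n, A n w <= A n.+1 w by near: w; exact: Hm.
have hr : forall t : 'I_T, (fun m : nat => (m * m)%:R^-1 *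
    \sum_(m <= l < (m + m * m).+1) (beta (A^~ w) (c^~ w) t l (supnorm L))%:R : R)
    @ \oo --> 0.
  by near: w; exact: (Hr (ae_filter_ringOfSetsType _)).
apply: (@cesaro_windows R T (fun l => is_rare (c l w) &&
           Yhit ty theta thetas (A^~ w) (c^~ w) l)
         (fun t l => beta (A^~ w) (c^~ w) t l (supnorm L))); last exact: hr.
move=> l; apply: rare_hit_beta => //.
- move=> t; case/andP: (htheta t) => h0 h1; rewrite h0 /=.
  exact: le_trans h1 (le_supnorm _ _).
- move=> t; case/andP: (hthetas t) => h0 h1; rewrite h0 /=.
  exact: le_trans h1 (le_supnorm _ _).
Unshelve. all: by end_near.
Qed.
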